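(* For all $n,k\in\mathbb{N}$, the logics $L^k(\mathcal{Q}^{\mathrm{b}}_n)$ and $\mathcal{L}^{k}_{\infty}(\mathcal{Q}_n)$ are equivalent: for every relational signature $\sigma$, every formula of either logic over $\sigma$ is equivalent (on all $\sigma$-structures and all assignments of its free variables) to a formula of the other logic with the same free variables.
   Context: Generalised quantifiers: for a finite relational signature $\tau$ and a class $K$ of $\tau$-structures closed under isomorphism, $Q_K$ has arity equal to the maximum arity of a relation in $\tau$; $Q_K\bar x\,(\phi_R(\bar x_R,\bar y_R))_{R\in\tau}$ holds in $(\mathcal{A},\bar a)$ iff the $\tau$-structure with universe $A$ and each $R$ interpreted as the set of tuples $\bar b$ with $\mathcal{A}\models\phi_R(\bar b,\bar a)$ belongs to $K$. $K$ is bijection-closed if whenever $\mathcal{C}\in K$ and $f:\mathcal{C}\to\mathcal{D}$ is a bijective homomorphism, $\mathcal{D}\in K$. $\mathcal{L}^{k}_{\infty}(\mathcal{Q}_n)$: formulas in the $k$ variables $x_1,\dots,x_k$ of infinitary logic (atomic formulas, negation, conjunctions and disjunctions over arbitrary sets, $\exists$, $\forall$) extended with all generalised quantifiers $Q_K$ of arity $n$. $L^k(\mathcal{Q}^{\mathrm{b}}_n)$: the smallest class of $k$-variable formulas containing atomic and negated atomic formulas, closed under arbitrary conjunctions and disjunctions and under application of $Q_K$ for every bijection-closed class $K$ with $Q_K$ of arity $n$ (negation is only allowed on atoms). *)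

(* Defs.v *)
From mathcomp Require Import all_boot.


Record structure (S : Type) (ar : S -> nat) := Structure {
  dom : finType;
  rel : forall R : S, ('I_(ar R) -> dom) -> Prop }.
Arguments dom {S ar} s.
Arguments rel {S ar} s R _.
Arguments Structure {S} ar dom rel.

Definition is_iso (S : Type) (ar : S -> nat) (C D : structure S ar)
  (f : dom C -> dom D) : Prop :=
  bijective f /\ forall (R : S) (t : 'I_(ar R) -> dom C), rel C R t <-> rel D R (f \o t).

Definition is_bij_hom (S : Type) (ar : S -> nat) (C D : structure S ar)
  (f : dom C -> dom D) : Prop :=
  bijective f /\ forall (R : S) (t : 'I_(ar R) -> dom C), rel C R t -> rel D R (f \o t).

Definition iso_closed (S : Type) (ar : S -> nat) (K : structure S ar -> Prop) : Prop :=
  forall (C D : structure S ar) (f : dom C -> dom D), is_iso S ar C D f -> K C -> K D.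

Definition bij_closed (S : Type) (ar : S -> nat) (K : structure S ar -> Prop) : Prop :=
  forall (C D : structure S ar) (f : dom C -> dom D), is_bij_hom S ar C D f -> K C -> K D.

Definition qarity (tau : finType) (ar : tau -> nat) : nat := \max_(R : tau) ar R.

Section Syntax.
Variables (S : Type) (arS : S -> nat) (k : nat).

(* FQ tau ar K vars psi  is  Q_K xbar (psi_R(xbar_R, ...))_{R in tau},
   where vars R : 'I_(ar R) -> 'I_k is the tuple of variables xbar_R bound in psi_R. *)
Inductive fml : Type :=
| FEq  : 'I_k -> 'I_k -> fml
| FRel : forall R : S, ('I_(arS R) -> 'I_k) -> fml
| FNot : fml -> fml
| FAnd : forall I : Type, (I -> fml) -> fml
| FOr  : forall I : Type, (I -> fml) -> fml
| FEx  : 'I_k -> fml -> fml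
| FAll : 'I_k -> fml -> fml
| FQ   : forall (tau : finType) (ar : tau -> nat) (K : structure tau ar -> Prop),
           (forall R : tau, 'I_(ar R) -> 'I_k) -> (tau -> fml) -> fml.

Definition upd (T : Type) (s : 'I_k -> T) (i : 'I_k) (a : T) : 'I_k -> T :=
  fun j => if j == i then a else s j.

(* For the quantifier case the tuple b belongs to the defined
   relation R iff psi_R holds under an assignment that agrees with s off the
   variables vars R and sends vars R j to b j (the usual reading of
   "A |= psi_R(b, a)"; if vars R has repetitions, b must respect them). *)
Fixpoint sat (A : structure S arS) (phi : fml) (s : 'I_k -> dom A) {struct phi} : Prop :=
  match phi with
  | FEq i j => s i = s j
  | FRel R v => rel A R (s \o v)
  | FNot p => ~ sat A p s
  | FAnd J F => forall x : J, sat A (F x) s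
  | FOr J F => exists x : J, sat A (F x) s
  | FEx i p => exists a : dom A, sat A p (upd (dom A) s i a)
  | FAll i p => forall a : dom A, sat A p (upd (dom A) s i a)
  | FQ tau ar K vars psi =>
      K (@Structure tau ar (dom A)
           (fun R b => exists s' : 'I_k -> dom A,
               (forall v, (forall j, vars R j <> v) -> s' v = s v) /\
               (forall j, s' (vars R j) = b j) /\
               sat A (psi R) s'))
  end.

Fixpoint free (v : 'I_k) (phi : fml) : Prop :=
  match phi with
  | FEq i j => v = i \/ v = j
  | FRel R w => exists j, w j = v
  | FNot p => free v p
  | FAnd J F => exists x : J, free v (F x)
  | FOr J F => exists x : J, free v (F x)
  | FEx i p => v <> i /\ free v p
  | FAll i p => v <> i /\ free v p
  | FQ tau ar K vars psi => exists R : tau, (forall j, vars R j <> v) /\ free v (psi R)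
  end.

Definition is_atomic (phi : fml) : Prop :=
  match phi with FEq _ _ | FRel _ _ => True | _ => False end.

Fixpoint in_Linf (n : nat) (phi : fml) : Prop :=
  match phi with
  | FEq _ _ | FRel _ _ => True
  | FNot p => in_Linf n p
  | FAnd J F | FOr J F => forall x : J, in_Linf n (F x)
  | FEx _ p | FAll _ p => in_Linf n p
  | FQ tau ar K vars psi =>
      iso_closed tau ar K /\ qarity tau ar = n /\ forall R : tau, in_Linf n (psi R)
  end.

Fixpoint in_Lb (n : nat) (phi : fml) : Prop :=
  match phi with
  | FEq _ _ | FRel _ _ => True
  | FNot p => is_atomic p
  | FAnd J F | FOr J F => forall x : J, in_Lb n (F x)
  | FEx _ _ | FAll _ _ => False
  | FQ tau ar K vars psi =>
      bij_closed tau ar K /\ qarity tau ar = n /\ forall R : tau, in_Lb n (psi R)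
  end.

Definition same_free (phi psi : fml) : Prop := forall v, free v phi <-> free v psi.

Definition equivalent (phi psi : fml) : Prop :=
  forall (A : structure S arS) (s : 'I_k -> dom A), sat A phi s <-> sat A psi s.

End Syntax.

Arguments FEq {S arS k}.
Arguments FRel {S arS k}.
Arguments FNot {S arS k}.
Arguments FAnd {S arS k}.
Arguments FOr {S arS k}.
Arguments FEx {S arS k}.
Arguments FAll {S arS k}.
Arguments FQ {S arS k}.
Arguments sat {S arS k} A phi s.
Arguments free {S arS k} v phi.
Arguments in_Linf {S arS k} n phi.
Arguments in_Lb {S arS k} n phi.
Arguments same_free {S arS k} phi psi.
Arguments equivalent {S arS k} phi psi.

(* Main.v *)
Require Import Defs.
From mathcomp Require Import all_boot.
From Stdlib Require Import Classical FunctionalExtensionality.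

Set Warnings "-notation-overridden".

Definition tau2 (tau : finType) : finType := (tau + tau)%type.
Definition sumar {tau : finType} (ar : tau -> nat) : tau2 tau -> nat :=
  fun x => match x with inl R => ar R | inr R => ar R end.
Definition sumvars {k} {tau : finType} {ar : tau -> nat}
  (vars : forall R : tau, 'I_(ar R) -> 'I_k) : forall R' : tau2 tau, 'I_(sumar ar R') -> 'I_k :=
  fun R' => match R' as x return 'I_(sumar ar x) -> 'I_k with
            | inl R => vars R | inr R => vars R end.

Definition consis {k} {T : Type} {m} (w : 'I_m -> 'I_k) (b : 'I_m -> T) : Prop :=
  forall j j', w j = w j' -> b j = b j'.

Definition defrel {k} {T : Type} (s : 'I_k -> T) {m} (w : 'I_m -> 'I_k)
  (Q : ('I_k -> T) -> Prop) (b : 'I_m -> T) : Prop :=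
  exists s' : 'I_k -> T, (forall v, (forall j, w j <> v) -> s' v = s v) /\
     (forall j, s' (w j) = b j) /\ Q s'.

Definition Kstar {k} {tau : finType} {ar : tau -> nat} (P : structure tau ar -> Prop)
  (vars : forall R : tau, 'I_(ar R) -> 'I_k) (D : structure (tau2 tau) (sumar ar)) : Prop :=
  exists C : structure tau ar, P C /\ (forall R t, Defs.rel C R t -> consis (vars R) t) /\
    exists f : dom C -> dom D, bijective f /\
      forall R (t : 'I_(ar R) -> dom C), consis (vars R) t ->
        (Defs.rel C R t -> Defs.rel D (inl R) (f \o t)) /\ (~ Defs.rel C R t -> Defs.rel D (inr R) (f \o t)).

Definition ar1 (n : nat) : unit -> nat := fun _ => n.
Definition Kex (n : nat) (D : structure unit (ar1 n)) : Prop := exists b, Defs.rel D tt b.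
Definition Kall (n : nat) (D : structure unit (ar1 n)) : Prop :=
  forall a : dom D, Defs.rel D tt (fun _ => a).

Lemma bij_iso (S : Type) (ar : S -> nat) C D f : is_iso S ar C D f -> is_bij_hom S ar C D f.
Proof. move=> [Hb H]; split => // R t; apply H. Qed.

Lemma Lb_Linf {S arS k} n (phi : fml S arS k) : in_Lb n phi -> in_Linf n phi.
Proof.
elim: phi => [i j|R v|p IH|J F IH|J F IH|i p IH|i p IH|tau ar K vars psi IH] /=.
- by [].
- by [].
- by case: p {IH}.
- by move=> H x; apply: IH.
- by move=> H x; apply: IH.
- by [].
- by [].
- move=> [Hb [Hq Hp]]; split; last split => //.
  + move=> C D f Hf; apply: Hb; exact: bij_iso Hf.
  + by move=> R; apply: IH.
Qed.

Section DR.
Context {k : nat} {T : Type} (s : 'I_k -> T) {m : nat} (w : 'I_m -> 'I_k).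

Lemma defrel_cons Q b : defrel s w Q b -> consis w b.
Proof. move=> [s' [_ [H _]]] j j' E; by rewrite -!H E. Qed.

Lemma defrel_uniq b s1 s2 :
  (forall v, (forall j, w j <> v) -> s1 v = s v) -> (forall j, s1 (w j) = b j) ->
  (forall v, (forall j, w j <> v) -> s2 v = s v) -> (forall j, s2 (w j) = b j) -> s1 = s2.
Proof.
move=> A1 B1 A2 B2; apply: functional_extensionality => v.
case: (classic (exists j, w j = v)) => [[j <-]|N]; first by rewrite B1 B2.
have H : forall j, w j <> v by move=> j E; apply: N; exists j.
by rewrite A1 // A2.
Qed.

Lemma defrel_exist b : consis w b -> exists s' : 'I_k -> T,
  (forall v, (forall j, w j <> v) -> s' v = s v) /\ (forall j, s' (w j) = b j).
Proof.
move=> Hc.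
exists (fun v => if [pick j | w j == v] is Some j then b j else s v); split.
- move=> v H; case: pickP => // j /eqP E; by case: (H j).
- move=> j; case: pickP => [j' /eqP E|]; first by apply: Hc.
  by move=> /(_ j); rewrite eqxx.
Qed.

Lemma defrel_ext Q1 Q2 b : (forall s', Q1 s' <-> Q2 s') -> (defrel s w Q1 b <-> defrel s w Q2 b).
Proof.
move=> H; split => [[s' [A [B C]]]|[s' [A [B C]]]]; exists s'; do 2 split => //; by apply/H.
Qed.

Lemma defrel_neg Q1 Q2 b : (forall s', Q2 s' <-> ~ Q1 s') ->
  (defrel s w Q2 b <-> consis w b /\ ~ defrel s w Q1 b).
Proof.
move=> H; split.
- move=> D; split; first exact: defrel_cons D.
  move: D => [s1 [A1 [B1 C1]]] [s2 [A2 [B2 C2]]].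
  have E := @defrel_uniq b s1 s2 A1 B1 A2 B2; subst s2.
  by move/H: C1.
- move=> [Hc N]; have [s' [A B]] := @defrel_exist b Hc.
  exists s'; do 2 split => //; apply/H => Q; apply: N; by exists s'.
Qed.

End DR.

Lemma Kstar_bij {k} (tau : finType) (ar : tau -> nat) P (vars : forall R : tau, 'I_(ar R) -> 'I_k) :
  bij_closed (tau2 tau) (sumar ar) (Kstar P vars).
Proof.
move=> D E g [Hg Hh] [C [PC [Cc [f [Hf H]]]]].
exists C; split => //; split => //; exists (g \o f); split; first exact: bij_comp.
move=> R t Ht; have [H1 H2] := H R t Ht; split.
- move=> /H1 HD; exact: (Hh (inl R) (f \o t) HD).
- move=> /H2 HD; exact: (Hh (inr R) (f \o t) HD).
Qed.

Lemma consis_comp {k} {T U : Type} {m} (w : 'I_m -> 'I_k) (f : T -> U) (t : 'I_m -> T) :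
  injective f -> consis w (f \o t) -> consis w t.
Proof. move=> Hf H j j' E; apply: Hf; exact: H. Qed.

Lemma Kstar_correct {k} (tau : finType) (ar : tau -> nat) P (vars : forall R : tau, 'I_(ar R) -> 'I_k)
  (T : finType) (rD : forall R' : tau2 tau, ('I_(sumar ar R') -> T) -> Prop)
  (rE : forall R : tau, ('I_(ar R) -> T) -> Prop) :
  let D := Structure (sumar ar) T rD in
  iso_closed tau ar P ->
  (forall R b, Defs.rel D (inl R) b <-> rE R b) ->
  (forall R b, Defs.rel D (inr R) b <-> consis (vars R) b /\ ~ rE R b) ->
  (forall R b, rE R b -> consis (vars R) b) ->
  (Kstar P vars D <-> P (Structure ar (dom D) rE)).
Proof.
move=> D HP H1 H2 Hc; split.
- move=> [C [PC [Cc [f [Hf H]]]]].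
  apply: (HP C (Structure ar (dom D) rE) f) => //; split => // R t /=.
  case: (classic (consis (vars R) t)) => Ht.
  + have [Ha Hb] := H R t Ht; split; first by move/Ha/H1.
    move=> HE; apply: NNPP => N; move/Hb/H2: N => [_]; by apply.
  + split; first by move/Cc.
    move/Hc => Hft; exfalso; apply: Ht; apply: consis_comp Hft; exact: bij_inj.
- move=> PE; exists (Structure ar (dom D) rE); split => //; split; first exact: Hc.
  exists id; split; first by exists id.
  move=> R t Ht; split => /= HE; first by apply/H1.
  by apply/H2.
Qed.

Lemma Kex_bij n : bij_closed unit (ar1 n) (Kex n).
Proof. move=> D E g [Hg Hh] [b Hb]; exists (g \o b); exact: (Hh tt b Hb). Qed.

Lemma Kall_bij n : bij_closed unit (ar1 n) (Kall n).
Proof.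
move=> D E g [Hg Hh] H a; case: Hg => g' gK g'K.
have := Hh tt (fun _ => g' a) (H (g' a)).
have -> // : g \o (fun _ : 'I_(ar1 n tt) => g' a) = (fun _ => a).
by apply: functional_extensionality => j /=; rewrite g'K.
Qed.

Lemma iso_sym (S : Type) (ar : S -> nat) C D f : is_iso S ar C D f -> exists g, is_iso S ar D C g.
Proof.
move=> [[g fg gf] H]; exists g; split; first by exists f.
move=> R t; have := H R (g \o t).
have -> : f \o (g \o t) = t by apply: functional_extensionality => j /=; rewrite gf.
by move=> E; split => /E.
Qed.

Lemma iso_closed_neg (S : Type) (ar : S -> nat) P : iso_closed S ar P -> iso_closed S ar (fun C => ~ P C).
Proof.
move=> HP C D f Hf NC PD; apply: NC; have [g Hg] := @iso_sym S ar C D f Hf; exact: (HP D C g Hg PD).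
Qed.

Section CONST.
Context {k : nat} {T : Type} (s : 'I_k -> T) {m : nat} (i : 'I_k).

Lemma defrel_const_ex Q b : defrel s (fun _ : 'I_m => i) Q b -> exists a, Q (upd k T s i a).
Proof.
move=> [s' [A [B C]]]; exists (s' i).
have -> : upd k T s i (s' i) = s'; last by [].
apply: functional_extensionality => v; rewrite /upd; case: eqP => [->|ne] //.
symmetry; apply: A => j E; by apply: ne.
Qed.

Lemma upd_defrel (j0 : 'I_m) Q a : Q (upd k T s i a) -> defrel s (fun _ : 'I_m => i) Q (fun _ => a).
Proof.
move=> H; exists (upd k T s i a); split; last split => //.
- move=> v Hv; rewrite /upd; case: eqP => // E; exfalso; exact: (Hv j0 (esym E)).
- by move=> j; rewrite /upd eqxx.
Qed.

Lemma defrel_const_all (j0 : 'I_m) Q a : defrel s (fun _ : 'I_m => i) Q (fun _ => a) -> Q (upd k T s i a).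
Proof.
move=> [s' [A [B C]]].
have E : s' = upd k T s i a.
  apply: functional_extensionality => v; rewrite /upd; case: eqP => [->|ne]; first exact: B j0.
  apply: A => j E; by apply: ne.
by rewrite -E.
Qed.
End CONST.

Fixpoint tr {S arS k} (n : nat) (b : bool) (phi : fml S arS k) : fml S arS k :=
 match phi with
 | FEq i j => if b then FEq i j else FNot (FEq i j)
 | FRel R v => if b then FRel R v else FNot (FRel R v)
 | FNot p => tr n (~~ b) p
 | FAnd J F => if b then FAnd J (fun x => tr n true (F x)) else FOr J (fun x => tr n false (F x))
 | FOr J F => if b then FOr J (fun x => tr n true (F x)) else FAnd J (fun x => tr n false (F x))
 | FEx i p => FQ unit (ar1 n) (if b then Kex n else Kall n) (fun _ _ => i) (fun _ => tr n b p)
 | FAll i p => FQ unit (ar1 n) (if b then Kall n else Kex n) (fun _ _ => i) (fun _ => tr n b p)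
 | FQ tau ar K vars psi =>
     FQ (tau2 tau) (sumar ar) (Kstar (if b then K else fun C => ~ K C) vars) (sumvars vars)
        (fun R' => match R' with inl R => tr n true (psi R) | inr R => tr n false (psi R) end)
 end.

Lemma sat_FQ {S arS k} (A : structure S arS) (tau : finType) (ar : tau -> nat) K (vars : forall R : tau, 'I_(ar R) -> 'I_k) (psi : tau -> fml S arS k) s :
  sat A (FQ tau ar K vars psi) s =
  K (Structure ar (dom A) (fun R b => defrel s (vars R) (sat A (psi R)) b)).
Proof. by []. Qed.

Lemma tr_Ex {S arS k} n b i (p : fml S arS k) : tr n b (FEx i p) =
  FQ unit (ar1 n) (if b then Kex n else Kall n) (fun _ _ => i) (fun _ => tr n b p).
Proof. by []. Qed.
Lemma tr_All {S arS k} n b i (p : fml S arS k) : tr n b (FAll i p) =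
  FQ unit (ar1 n) (if b then Kall n else Kex n) (fun _ _ => i) (fun _ => tr n b p).
Proof. by []. Qed.
Lemma tr_Q {S arS k} n b (tau : finType) (ar : tau -> nat) K (vars : forall R : tau, 'I_(ar R) -> 'I_k) (psi : tau -> fml S arS k) :
  tr n b (FQ tau ar K vars psi) =
     FQ (tau2 tau) (sumar ar) (Kstar (if b then K else fun C => ~ K C) vars) (sumvars vars)
        (fun R' => match R' with inl R => tr n true (psi R) | inr R => tr n false (psi R) end).
Proof. by []. Qed.

Lemma tr_ok n (Hn : 0 < n) {S arS k} (phi : fml S arS k) : in_Linf n phi -> forall b,
  in_Lb n (tr n b phi) /\ (forall v, free v (tr n b phi) <-> free v phi) /\
  (forall A s, sat A (tr n b phi) s <-> if b then sat A phi s else ~ sat A phi s).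
Proof.
elim: phi => [i j|R v|p IH|J F IH|J F IH|i p IH|i p IH|tau ar K vars psi IH].
- by move=> _ [|] /=.
- by move=> _ [|] /=.
- move=> /= H b; have [H1 [H2 H3]] := IH H (~~ b); split => //; split => // A s.
  rewrite H3; clear H1 H2 H3; case: b => /=; first by [].
  split; [tauto | exact: NNPP].
- move=> /= H [|]; (split; [|split]) => /=.
  + by move=> x; case: (IH x (H x) true).
  + by move=> v; split => [[x Hx]|[x Hx]]; exists x; move: Hx; have [_ [-> _]] := IH x (H x) true.
  + by move=> A s; split => Hx x; move: (Hx x); have [_ [_ ->]] := IH x (H x) true.
  + by move=> x; case: (IH x (H x) false).
  + by move=> v; split => [[x Hx]|[x Hx]]; exists x; move: Hx; have [_ [-> _]] := IH x (H x) false.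
  + move=> A s; split.
    * move=> [x Hx] Hall; move: Hx; have [_ [_ ->]] := IH x (H x) false; apply; exact: Hall.
    * move=> N; apply: NNPP => N2; apply: N => x; apply: NNPP => N3; apply: N2; exists x.
      by have [_ [_ ->]] := IH x (H x) false.
- move=> /= H [|]; (split; [|split]) => /=.
  + by move=> x; case: (IH x (H x) true).
  + by move=> v; split => [[x Hx]|[x Hx]]; exists x; move: Hx; have [_ [-> _]] := IH x (H x) true.
  + by move=> A s; split => [[x Hx]|[x Hx]]; exists x; move: Hx; have [_ [_ ->]] := IH x (H x) true.
  + by move=> x; case: (IH x (H x) false).
  + by move=> v; split => [[x Hx]|[x Hx]]; exists x; move: Hx; have [_ [-> _]] := IH x (H x) false.
  + move=> A s; split.
    * move=> Hall [x Hx]; move: (Hall x); have [_ [_ ->]] := IH x (H x) false; by apply.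
    * move=> N x; have [_ [_ ->]] := IH x (H x) false; move=> Hx; apply: N; by exists x.
- move=> H b; have [H1 [H2 H3]] := IH H b; rewrite tr_Ex; split; last split.
  + split; first by case: (b) {H1 H2 H3}; [exact: Kex_bij|exact: Kall_bij].
    split; first by rewrite /qarity big_const card_unit /= maxn0.
    by move=> _.
  + move=> v /=; split => [[[] [Hv Hf]]|[Hv Hf]].
    * split; [move=> E; exact: Hv (Ordinal Hn) (esym E) | by apply/H2].
    * exists tt; split; [move=> j E; exact: Hv (esym E) | by apply/H2].
  + move=> A s; rewrite sat_FQ; case: b H1 H2 H3 => H1 H2 H3; rewrite /Kex /Kall /=; split.
    * move=> [b0 Hb]; have [a Ha] := defrel_const_ex _ _ _ _ Hb; exists a; by apply/H3.
    * move=> [a Ha]; exists (fun _ => a); apply: (upd_defrel _ _ (Ordinal Hn)); by apply/H3.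
    * move=> Hall [a Ha]; have := defrel_const_all _ _ (Ordinal Hn) _ _ (Hall a); move/H3; by apply.
    * move=> N a; apply: (upd_defrel _ _ (Ordinal Hn)); apply/H3 => Ha; apply: N; by exists a.
- move=> H b; have [H1 [H2 H3]] := IH H b; rewrite tr_All; split; last split.
  + split; first by case: (b) {H1 H2 H3}; [exact: Kall_bij|exact: Kex_bij].
    split; first by rewrite /qarity big_const card_unit /= maxn0.
    by move=> _.
  + move=> v /=; split => [[[] [Hv Hf]]|[Hv Hf]].
    * split; [move=> E; exact: Hv (Ordinal Hn) (esym E) | by apply/H2].
    * exists tt; split; [move=> j E; exact: Hv (esym E) | by apply/H2].
  + move=> A s; rewrite sat_FQ; case: b H1 H2 H3 => H1 H2 H3; rewrite /Kex /Kall /=; split.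
    * move=> Hall a; have := defrel_const_all _ _ (Ordinal Hn) _ _ (Hall a); by move/H3.
    * move=> Hall a; apply: (upd_defrel _ _ (Ordinal Hn)); apply/H3; exact: Hall.
    * move=> [b0 Hb] Hall; have [a Ha] := defrel_const_ex _ _ _ _ Hb; move/H3: Ha; apply; exact: Hall.
    * move=> N; apply: NNPP => N2; apply: N => a; apply: NNPP => N3; apply: N2.
      exists (fun _ => a); apply: (upd_defrel _ _ (Ordinal Hn)); by apply/H3.
- move=> [HK [Hq Hp]] b; rewrite tr_Q; split; last split.
  + split; first exact: Kstar_bij.
    split; first by rewrite /qarity big_sumType /= maxnn; exact: Hq.
    by case=> R /=; case: (IH R (Hp R) true); case: (IH R (Hp R) false).
  + move=> v /=; split.
    * move=> [[R|R] /= [Hv Hf]]; exists R; split => //.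
      - by have [_ [<- _]] := IH R (Hp R) true.
      - by have [_ [<- _]] := IH R (Hp R) false.
    * move=> [R [Hv Hf]]; exists (inl R); split => //=.
      by have [_ [-> _]] := IH R (Hp R) true.
  + move=> A s; rewrite sat_FQ.
    rewrite (@Kstar_correct _ _ _ _ _ _ _ (fun R b0 => defrel s (vars R) (sat A (psi R)) b0)).
    * by case: (b).
    * by case: (b); [exact: HK | exact: iso_closed_neg].
    * move=> R b0 /=; apply: defrel_ext => s'; by have [_ [_ ->]] := IH R (Hp R) true.
    * move=> R b0 /=; apply: defrel_neg => s'; by have [_ [_ ->]] := IH R (Hp R) false.
    * move=> R b0; exact: defrel_cons.
Qed.

Theorem lemma2p8 (n k : nat) (Hn : 1 <= n) :
  forall (S : Type) (arS : S -> nat),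
    (forall phi : fml S arS k, in_Linf n phi ->
       exists psi : fml S arS k,
         in_Lb n psi /\ same_free phi psi /\ equivalent phi psi) /\
    (forall phi : fml S arS k, in_Lb n phi ->
       exists psi : fml S arS k,
         in_Linf n psi /\ same_free phi psi /\ equivalent phi psi).
Proof.
move=> S arS; split => phi H.
- have [H1 [H2 H3]] := @tr_ok n Hn S arS k phi H true.
  exists (tr n true phi); split => //; split => [v|A s]; [exact: iff_sym (H2 v) | exact: iff_sym (H3 A s)].
- exists phi; split; first exact: Lb_Linf.
  by split => // v.
Qed.
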